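(* Let $(G,D,\star)$ be a probabilistic metric space with $\star$ continuous. Then: (1) $(Lip^1_\star(G,\Delta^+),\overline{\mathbb D},\star)$ is a complete probabilistic metric space, and $\delta:G\to Lip^1_\star(G,\Delta^+)$, $a\mapsto\delta_a$, is an isometric embedding, i.e. $\overline{\mathbb D}(\delta_a,\delta_b)=D(a,b)$; (2) if moreover $(G,\cdot,D,\star)$ is an invariant probabilistic metric group and $\star$ is also sup-continuous, then $\delta:(G,\cdot)\to(Lip^1_\star(G,\Delta^+),\odot)$ is a group homomorphism.
   Context: A distribution function is a nondecreasing, left-continuous function $F:[-\infty,+\infty]\to[0,1]$ with $F(-\infty)=0$, $F(+\infty)=1$; $\Delta^+$ is the set of distribution functions with $F(0)=0$, ordered pointwise (a complete lattice with maximum $\mathcal H_0$ and minimum $\mathcal H_\infty$, where $\mathcal H_0(t)=0$ for $t\le0$, $1$ for $t>0$, and $\mathcal H_\infty(t)=0$ for $t<+\infty$, $\mathcal H_\infty(+\infty)=1$). A triangle function is a binary operation $\star$ on $\Delta^+$ that is commutative, associative, nondecreasing in each argument, with $F\star\mathcal H_0=F$; it is sup-continuous if $\sup_i(F_i\star L)=(\sup_iF_i)\star L$ for every nonempty family $(F_i)$ and every $L$. $F_n\xrightarrow{w}F$ means $F_n(t)\to F(t)$ at every continuity point $t\in\mathbb R$ of $F$; $\star$ is continuous if $F_n\star L_n\xrightarrow{w}F\star L$ whenever $F_n\xrightarrow{w}F$, $L_n\xrightarrow{w}L$. A probabilistic metric space $(G,D,\star)$ consists of a set $G$, a triangle function $\star$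 and $D:G\times G\to\Delta^+$ with (i) $D(p,q)=\mathcal H_0$ iff $p=q$; (ii) $D(p,q)=D(q,p)$; (iii) $D(p,q)\star D(q,r)\le D(p,r)$. If $(G,\cdot)$ is a group and $D(pr,qr)=D(rp,rq)=D(p,q)$ for all $p,q,r$, it is an invariant probabilistic metric group. A sequence $(z_n)$ is Cauchy if $D(z_n,z_p)\xrightarrow{w}\mathcal H_0$ as $n,p\to\infty$; completeness means every Cauchy sequence has a point $z$ with $D(z_n,z)\xrightarrow{w}\mathcal H_0$. $Lip^1_\star(G,\Delta^+)$ is the set of maps $f:G\to\Delta^+$ with $D(x,y)\star f(y)\le f(x)$ for all $x,y$. $\delta_a(y)=D(y,a)$. $\Pi(G)$ is the set of $f\in Lip^1_\star(G,\Delta^+)$ for which there is a Cauchy sequence $(a_n)\subset G$ with $D(a_n,x)\xrightarrow{w}f(x)$ for all $x$. $\mathbb D(f,g)=\sup_{x\in G}f(x)\star g(x)$ for $f,g\in\Pi(G)$. $\overline{\mathbb D}$ on $Lip^1_\star(G,\Delta^+)$ is: $\overline{\mathbb D}(f,g)=\mathbb D(f,g)$ if $f,g\in\Pi(G)$; $\overline{\mathbb D}(f,g)=\mathcal H_0$ if $f=g$; $\overline{\mathbb D}(f,g)=\mathcal H_\infty$ if $f\ne g$ and $(f,g)\notin\Pi(G)\times\Pi(G)$. For maps $f,g:G\to\Delta^+$, $(f\odot g)(x)=\sup_{y,z\in G,\ yz=x}f(y)\star g(z)$. *)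

(* Defs.v *)
From Stdlib Require Import Reals Classical ClassicalEpsilon FunctionalExtensionality.
Open Scope R_scope.

(* An element of Delta^+ is represented by its restriction to the real line
   (values at -oo and +oo are fixed to 0 and 1 respectively). *)
Definition DF := R -> R.

Definition fle (F L : DF) : Prop := forall t, F t <= L t.

Definition left_continuous (F : DF) : Prop :=
  forall t eps, 0 < eps -> exists del, 0 < del /\
    forall s, t - del < s < t -> Rabs (F s - F t) < eps.

Definition Dplus (F : DF) : Prop :=
  (forall t, 0 <= F t <= 1) /\
  (forall s t, s <= t -> F s <= F t) /\
  left_continuous F /\
  F 0 = 0.

Definition H0 : DF := fun t => if Rle_dec t 0 then 0 else 1.
Definition Hinf : DF := fun _ => 0.

(* lattice supremum in Delta^+ (pointwise; the empty sup is H_infinity) *)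
Definition Rsup (E : R -> Prop) : R :=
  epsilon (inhabits 0) (fun m => is_lub (fun y => y = 0 \/ E y) m).
Definition fsup {I : Type} (F : I -> DF) : DF :=
  fun t => Rsup (fun y => exists i, y = F i t).

Definition triangle_function (star : DF -> DF -> DF) : Prop :=
  (forall F L, Dplus F -> Dplus L -> Dplus (star F L)) /\
  (forall F L, Dplus F -> Dplus L -> star F L = star L F) /\
  (forall F L M, Dplus F -> Dplus L -> Dplus M ->
      star (star F L) M = star F (star L M)) /\
  (forall F F' L, Dplus F -> Dplus F' -> Dplus L -> fle F F' ->
      fle (star F L) (star F' L)) /\
  (forall F L L', Dplus F -> Dplus L -> Dplus L' -> fle L L' ->
      fle (star F L) (star F L')) /\
  (forall F, Dplus F -> star F H0 = F).

Definition sup_continuous (star : DF -> DF -> DF) : Prop :=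
  forall (I : Type) (F : I -> DF) (L : DF), inhabited I ->
    (forall i, Dplus (F i)) -> Dplus L ->
    fsup (fun i => star (F i) L) = star (fsup F) L.

Definition wconv (Fn : nat -> DF) (F : DF) : Prop :=
  forall t, continuity_pt F t -> Un_cv (fun n => Fn n t) (F t).

Definition star_continuous (star : DF -> DF -> DF) : Prop :=
  forall (Fn Ln : nat -> DF) (F L : DF),
    (forall n, Dplus (Fn n)) -> (forall n, Dplus (Ln n)) -> Dplus F -> Dplus L ->
    wconv Fn F -> wconv Ln L -> wconv (fun n => star (Fn n) (Ln n)) (star F L).

Definition PMspace (X : Type) (Dx : X -> X -> DF) (star : DF -> DF -> DF) : Prop :=
  triangle_function star /\
  (forall p q, Dplus (Dx p q)) /\
  (forall p q, Dx p q = H0 <-> p = q) /\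
  (forall p q, Dx p q = Dx q p) /\
  (forall p q r, fle (star (Dx p q) (Dx q r)) (Dx p r)).

Definition Cauchy_seq (X : Type) (Dx : X -> X -> DF) (z : nat -> X) : Prop :=
  forall t, continuity_pt H0 t -> forall eps, 0 < eps ->
    exists N, forall n p, (N <= n)%nat -> (N <= p)%nat ->
      Rabs (Dx (z n) (z p) t - H0 t) < eps.

Definition complete (X : Type) (Dx : X -> X -> DF) : Prop :=
  forall z : nat -> X, Cauchy_seq X Dx z ->
    exists z0, wconv (fun n => Dx (z n) z0) H0.

Definition isLip (G : Type) (D : G -> G -> DF) (star : DF -> DF -> DF)
    (f : G -> DF) : Prop :=
  (forall x, Dplus (f x)) /\ (forall x y, fle (star (D x y) (f y)) (f x)).

Definition delta (G : Type) (D : G -> G -> DF) (a : G) : G -> DF :=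
  fun y => D y a.

Definition inPi (G : Type) (D : G -> G -> DF) (star : DF -> DF -> DF)
    (f : G -> DF) : Prop :=
  isLip G D star f /\
  exists a : nat -> G, Cauchy_seq G D a /\
    forall x, wconv (fun n => D (a n) x) (f x).

Definition DD (G : Type) (star : DF -> DF -> DF) (f g : G -> DF) : DF :=
  fsup (fun x : G => star (f x) (g x)).

Definition Dbar (G : Type) (D : G -> G -> DF) (star : DF -> DF -> DF)
    (f g : G -> DF) : DF :=
  if excluded_middle_informative (inPi G D star f /\ inPi G D star g)
  then DD G star f g
  else if excluded_middle_informative (f = g) then H0 else Hinf.

Definition LipT (G : Type) (D : G -> G -> DF) (star : DF -> DF -> DF) : Type :=
  { f : G -> DF | isLip G D star f }.

Definition DbarL (G : Type) (D : G -> G -> DF) (star : DF -> DF -> DF)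
    (f g : LipT G D star) : DF :=
  Dbar G D star (proj1_sig f) (proj1_sig g).

Definition is_group (G : Type) (mul : G -> G -> G) (e : G) (inv : G -> G) : Prop :=
  (forall x y z, mul (mul x y) z = mul x (mul y z)) /\
  (forall x, mul e x = x /\ mul x e = x) /\
  (forall x, mul (inv x) x = e /\ mul x (inv x) = e).

Definition invariant (G : Type) (mul : G -> G -> G) (D : G -> G -> DF) : Prop :=
  forall p q r, D (mul p r) (mul q r) = D p q /\ D (mul r p) (mul r q) = D p q.

Definition odot (G : Type) (mul : G -> G -> G) (star : DF -> DF -> DF)
    (f g : G -> DF) : G -> DF :=
  fun x => fsup (fun yz : { p : G * G | mul (fst p) (snd p) = x } =>
                   star (f (fst (proj1_sig yz))) (g (snd (proj1_sig yz)))).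

(* Main.v *)
Require Import Defs.
From Stdlib Require Import Reals ZArith Lra Lia Classical ClassicalEpsilon FunctionalExtensionality ProofIrrelevance.
Open Scope R_scope.

Lemma Dp_nonneg F t : Dplus F -> 0 <= F t.
Proof. intros [H _]. apply H. Qed.
Lemma Dp_le1 F t : Dplus F -> F t <= 1.
Proof. intros [H _]. apply H. Qed.
Lemma Dp_mono F s t : Dplus F -> s <= t -> F s <= F t.
Proof. intros [_ [H _]]. apply H. Qed.
Lemma Dp_lc F : Dplus F -> left_continuous F.
Proof. intros [_ [_ [H _]]]. exact H. Qed.
Lemma Dp_neg F t : Dplus F -> t <= 0 -> F t = 0.
Proof.
  intros HF Ht. pose proof (Dp_nonneg F t HF). pose proof (Dp_mono F t 0 HF Ht).
  destruct HF as [_ [_ [_ H0']]]. lra.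
Qed.
Lemma H0_pos t : 0 < t -> H0 t = 1.
Proof. intros. unfold H0. destruct (Rle_dec t 0); lra. Qed.
Lemma H0_npos t : t <= 0 -> H0 t = 0.
Proof. intros. unfold H0. destruct (Rle_dec t 0); lra. Qed.
Lemma Dp_leH0 F : Dplus F -> fle F H0.
Proof.
  intros HF t. destruct (Rle_dec t 0).
  - rewrite H0_npos, (Dp_neg F t); auto; lra.
  - rewrite H0_pos by lra. apply Dp_le1; auto.
Qed.
Lemma H0_Dp : Dplus H0.
Proof.
  split; [|split; [|split]].
  - intros t; unfold H0; destruct (Rle_dec t 0); lra.
  - intros s t Hst; unfold H0; destruct (Rle_dec t 0), (Rle_dec s 0); lra.
  - intros t eps He. destruct (Rle_dec t 0).
    + exists 1; split; [lra|]. intros s Hs. rewrite !H0_npos by lra. rewrite Rminus_0_r, Rabs_R0; lra.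
    + exists t; split; [lra|]. intros s Hs. rewrite !H0_pos by lra. rewrite Rminus_diag, Rabs_R0; lra.
  - apply H0_npos; lra.
Qed.
Lemma Hinf_Dp : Dplus Hinf.
Proof.
  unfold Hinf. split; [|split; [|split]]; try (intros; lra).
  intros t eps He. exists 1; split; [lra|]. intros. rewrite Rminus_diag, Rabs_R0; lra.
Qed.
Lemma H0_neq_Hinf : H0 <> Hinf.
Proof. intros H. assert (E1 : H0 1 = Hinf 1) by (rewrite H; auto). rewrite H0_pos in E1 by lra. unfold Hinf in E1; lra. Qed.

Lemma fle_refl F : fle F F.
Proof. intros t; lra. Qed.
Lemma fle_trans F G K : fle F G -> fle G K -> fle F K.
Proof. intros A B t. specialize (A t); specialize (B t); lra. Qed.
Lemma fle_antisym F G : fle F G -> fle G F -> F = G.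
Proof. intros A B. apply functional_extensionality. intros t. specialize (A t); specialize (B t); lra. Qed.

Lemma Rsup_lub (E : R -> Prop) (B : R) :
  (forall y, E y -> y <= B) -> is_lub (fun y => y = 0 \/ E y) (Rsup E).
Proof.
  intros HB. unfold Rsup. apply epsilon_spec.
  destruct (completeness (fun y => y = 0 \/ E y)) as [m Hm].
  - exists (Rmax 0 B). intros y [->|Hy]. apply Rmax_l. eapply Rle_trans. apply HB; auto. apply Rmax_r.
  - exists 0; left; reflexivity.
  - exists m; exact Hm.
Qed.
Lemma Rsup_ub (E : R -> Prop) B y : (forall y, E y -> y <= B) -> E y -> y <= Rsup E.
Proof. intros HB Hy. destruct (Rsup_lub E B HB) as [H _]. apply H; auto. Qed.
Lemma Rsup_ge0 (E : R -> Prop) B : (forall y, E y -> y <= B) -> 0 <= Rsup E.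
Proof. intros HB. destruct (Rsup_lub E B HB) as [H _]. apply H; auto. Qed.
Lemma Rsup_le (E : R -> Prop) M : (forall y, E y -> y <= M) -> 0 <= M -> Rsup E <= M.
Proof. intros HB H0M. destruct (Rsup_lub E M HB) as [_ H]. apply H. intros y [->|Hy]; auto. Qed.
Lemma Rsup_approx (E : R -> Prop) B eps : (forall y, E y -> y <= B) -> 0 < eps ->
  Rsup E - eps < 0 \/ exists y, E y /\ Rsup E - eps < y.
Proof.
  intros HB He. destruct (Rsup_lub E B HB) as [H1 H2].
  apply NNPP; intros Hn.
  assert (is_upper_bound (fun y => y = 0 \/ E y) (Rsup E - eps)).
  { intros y [->|Hy]. apply Rnot_lt_le; intros Hc; apply Hn; left; auto.
    apply Rnot_lt_le; intros Hc; apply Hn; right; exists y; auto. }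
  specialize (H2 _ H). lra.
Qed.

Section FSUP.
Context {I : Type} (F : I -> DF) (HF : forall i, Dplus (F i)).
Lemma fsup_bnd t : forall y, (exists i, y = F i t) -> y <= 1.
Proof. intros y [i ->]. apply Dp_le1; auto. Qed.
Lemma fsup_ge i t : F i t <= fsup F t.
Proof. unfold fsup. eapply Rsup_ub. apply fsup_bnd. eauto. Qed.
Lemma fsup_ge0 t : 0 <= fsup F t.
Proof. unfold fsup. eapply Rsup_ge0. apply fsup_bnd. Qed.
Lemma fsup_le t M : (forall i, F i t <= M) -> 0 <= M -> fsup F t <= M.
Proof. intros H HM. unfold fsup. apply Rsup_le; auto. intros y [i ->]; auto. Qed.
Lemma fsup_approx t eps : 0 < eps -> fsup F t - eps < 0 \/ exists i, fsup F t - eps < F i t.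
Proof.
  intros He. destruct (Rsup_approx _ 1 eps (fsup_bnd t) He) as [H|[y [[i ->] Hy]]]; auto.
  right; exists i; auto.
Qed.
Lemma fsup_Dp : Dplus (fsup F).
Proof.
  split; [|split; [|split]].
  - intros t; split. apply fsup_ge0. apply fsup_le; [|lra]. intros; apply Dp_le1; auto.
  - intros s t Hst. apply fsup_le. intros i. eapply Rle_trans. apply Dp_mono; eauto. apply fsup_ge. apply fsup_ge0.
  - intros t eps He. destruct (fsup_approx t (eps/2)) as [H|[i Hi]]; [lra| |].
    + exists 1; split; [lra|]. intros s Hs.
      assert (fsup F s <= fsup F t). { apply fsup_le. intros i0. apply Rle_trans with (F i0 t). apply Dp_mono; auto; lra. apply fsup_ge. apply fsup_ge0. }
      pose proof (fsup_ge0 s). rewrite Rabs_left1; lra.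
    + destruct (Dp_lc _ (HF i) t (eps/2)) as [del [Hd Hdel]]; [lra|].
      exists del; split; auto. intros s Hs. specialize (Hdel s Hs).
      assert (fsup F s <= fsup F t). { apply fsup_le. intros j. apply Rle_trans with (F j t). apply Dp_mono; auto; lra. apply fsup_ge. apply fsup_ge0. }
      pose proof (fsup_ge i s). apply Rabs_def2 in Hdel. rewrite Rabs_left1; lra.
  - apply Rle_antisym. apply fsup_le; [|lra]. intros i. rewrite Dp_neg; auto; lra. apply fsup_ge0.
Qed.
End FSUP.
Ltac absr := unfold Rabs in *; repeat destruct Rcase_abs; lra.

Lemma cont_intro f x : (forall eps, 0 < eps -> exists del, 0 < del /\ forall y, Rabs (y - x) < del -> Rabs (f y - f x) < eps) -> continuity_pt f x.
Proof.
  intros H eps He. destruct (H eps He) as [d [Hd Hy]]. exists d; split; auto.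
  intros y [_ Hyd]. apply Hy. exact Hyd.
Qed.
Lemma cont_elim f x : continuity_pt f x -> forall eps, 0 < eps -> exists del, 0 < del /\ forall y, Rabs (y - x) < del -> Rabs (f y - f x) < eps.
Proof.
  intros H eps He. destruct (H eps He) as [d [Hd Hy]]. exists d; split; auto.
  intros y Hyx. destruct (Req_dec x y) as [<-|Hne].
  - rewrite Rminus_diag, Rabs_R0; lra.
  - apply (Hy y). split; [split; [exact I| exact Hne]| exact Hyx].
Qed.

Lemma cv_le (u v : nat -> R) l1 l2 N : Un_cv u l1 -> Un_cv v l2 -> (forall n, (N <= n)%nat -> u n <= v n) -> l1 <= l2.
Proof.
  intros Hu Hv Hle. apply Rnot_lt_le; intros Hc.
  destruct (Hu ((l1-l2)/2)) as [N1 H1]; [lra|]. destruct (Hv ((l1-l2)/2)) as [N2 H2]; [lra|].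
  specialize (H1 (N+N1+N2)%nat ltac:(lia)). specialize (H2 (N+N1+N2)%nat ltac:(lia)).
  specialize (Hle (N+N1+N2)%nat ltac:(lia)). unfold Rdist in *. absr.
Qed.
Lemma cv_le_const (u : nat -> R) l M N : Un_cv u l -> (forall n, (N <= n)%nat -> u n <= M) -> l <= M.
Proof. intros Hu H. apply (cv_le u (fun _ => M) l M N); auto. intros eps He. exists 0%nat. intros. unfold Rdist. rewrite Rminus_diag, Rabs_R0; lra. Qed.
Lemma cv_ge_const (u : nat -> R) l M N : Un_cv u l -> (forall n, (N <= n)%nat -> M <= u n) -> M <= l.
Proof. intros Hu H. apply (cv_le (fun _ => M) u M l N); auto. intros eps He. exists 0%nat. intros. unfold Rdist. rewrite Rminus_diag, Rabs_R0; lra. Qed.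

Lemma cv_const c : Un_cv (fun _ => c) c.
Proof. intros eps He. exists 0%nat. intros. unfold Rdist. rewrite Rminus_diag, Rabs_R0; lra. Qed.

Lemma cv_sub (u : nat -> R) l (phi : nat -> nat) : Un_cv u l -> (forall j, (j <= phi j)%nat) -> Un_cv (fun j => u (phi j)) l.
Proof. intros H Hp eps He. destruct (H eps He) as [N HN]. exists N. intros n Hn. apply HN. specialize (Hp n). lia. Qed.

Section DENSE.
Variable h : R -> R.
Hypothesis hmono : forall s t, s <= t -> h s <= h t.

Definition dstep (p : R * R) : R * R :=
  let a := fst p in let b := snd p in let d := (b - a) / 5 in
  if Rle_dec (h (a + 2*d) - h (a + d)) (h (a + 4*d) - h (a + 3*d)) then (a + d, a + 2*d) else (a + 3*d, a + 4*d).
Fixpoint dseq (p : R * R) (k : nat) : R * R := match k with O => p | S k => dstep (dseq p k) end.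

Lemma dstep_prop p : fst p < snd p ->
  fst p < fst (dstep p) /\ fst (dstep p) < snd (dstep p) /\ snd (dstep p) < snd p /\
  h (snd (dstep p)) - h (fst (dstep p)) <= (h (snd p) - h (fst p)) / 2.
Proof.
  destruct p as [a b]. simpl. intros Hab. unfold dstep; simpl.
  set (d := (b - a)/5). assert (0 < d) by (unfold d; lra). assert (Hb5 : b = a + 5*d) by (unfold d; lra).
  pose proof (hmono a (a+d) ltac:(lra)). pose proof (hmono (a+2*d) (a+3*d) ltac:(lra)).
  pose proof (hmono (a+4*d) b ltac:(unfold d; lra)).
  destruct (Rle_dec _ _); simpl; repeat split; try lra.
Qed.

Lemma dseq_prop a b k : a < b -> fst (dseq (a,b) k) < snd (dseq (a,b) k) /\
  h (snd (dseq (a,b) k)) - h (fst (dseq (a,b) k)) <= (h b - h a) / 2^k.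
Proof.
  intros Hab. induction k as [|k IH]; simpl.
  - split; [lra|]. unfold Rdiv; rewrite Rinv_1; lra.
  - destruct IH as [IH1 IH2]. destruct (dstep_prop _ IH1) as [A [B [C E]]]. split; auto.
    assert (0 < 2^k) by (apply pow_lt; lra).
    eapply Rle_trans; [apply E|]. unfold Rdiv. rewrite Rinv_mult. 
    apply Rle_trans with ((h b - h a) * / 2 ^ k * / 2); [|lra]. 
    apply Rmult_le_compat_r; [lra|]. exact IH2.
Qed.

Lemma dseq_nest a b j k : a < b -> (j <= k)%nat -> fst (dseq (a,b) j) <= fst (dseq (a,b) k) /\ snd (dseq (a,b) k) <= snd (dseq (a,b) j).
Proof.
  intros Hab Hjk. induction Hjk as [|k Hjk IH]. lra.
  simpl. destruct (dstep_prop (dseq (a,b) k)) as [A [B [C E]]]. apply dseq_prop; auto. lra.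
Qed.

Lemma pow2_ge k : INR k <= 2 ^ k.
Proof.
  induction k as [|k IH]. simpl; lra. rewrite S_INR. simpl.
  assert (1 <= 2^k) by (apply pow_R1_Rle; lra). lra.
Qed.

Lemma dense_cont a b : a < b -> exists x, a < x < b /\ continuity_pt h x.
Proof.
  intros Hab.
  set (u := fun k => fst (dseq (a,b) k)).
  assert (Hg : Un_growing u).
  { intros k. unfold u. apply dseq_nest; auto. }
  assert (Hub : has_ub u).
  { exists b. intros y [i ->]. unfold u. destruct (dseq_nest a b 0 i Hab ltac:(lia)). destruct (dseq_prop a b i Hab). simpl in *. lra. }
  destruct (growing_cv u Hg Hub) as [x Hx].
  assert (Hfx : forall k, fst (dseq (a,b) k) < x).
  { intros k. pose proof (growing_ineq u x Hg Hx (S k)). unfold u in H.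
    destruct (dstep_prop (dseq (a,b) k)) as [A _]. apply dseq_prop; auto. simpl in H. lra. }
  assert (Hsx : forall k, x < snd (dseq (a,b) k)).
  { intros k. assert (x <= snd (dseq (a,b) (S k))).
    { apply (cv_le_const u x _ 0 Hx). intros n _. unfold u.
      destruct (Compare_dec.le_lt_dec n (S k)) as [Hn|Hn].
      - destruct (dseq_nest a b n (S k) Hab Hn). destruct (dseq_prop a b (S k) Hab). lra.
      - destruct (dseq_nest a b (S k) n Hab ltac:(lia)). destruct (dseq_prop a b n Hab). lra. }
    destruct (dstep_prop (dseq (a,b) k)) as [_ [_ [C _]]]. apply dseq_prop; auto. simpl in H. lra. }
  exists x. split.
  - pose proof (Hfx 0%nat); pose proof (Hsx 0%nat). simpl in *; lra.
  - apply cont_intro. intros eps He.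
    assert (Hhab : 0 <= h b - h a) by (pose proof (hmono a b); lra).
    destruct (archimed ((h b - h a) / eps)) as [Hup _].
    set (k := Z.to_nat (up ((h b - h a)/eps))).
    assert (Hk : (h b - h a) / 2^k < eps).
    { assert (0 <= (h b - h a)/eps) by (unfold Rdiv; apply Rmult_le_pos; [lra|left; apply Rinv_0_lt_compat; lra]).
      assert (INR k > (h b - h a)/eps).
      { unfold k. rewrite INR_IZR_INZ. rewrite Z2Nat.id. lra. apply le_IZR. lra. }
      pose proof (pow2_ge k). assert (0 < 2^k) by (apply pow_lt; lra).
      apply (Rmult_lt_reg_r (2^k)); auto. unfold Rdiv. rewrite Rmult_assoc, Rinv_l by lra.
      apply Rmult_lt_reg_r with (/eps). apply Rinv_0_lt_compat; lra.
      replace (eps * 2^k * /eps) with (2^k) by (field; lra). unfold Rdiv in H0. lra. }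
    pose proof (Hfx k); pose proof (Hsx k). destruct (dseq_prop a b k Hab) as [_ Hk2].
    exists (Rmin (x - fst (dseq (a,b) k)) (snd (dseq (a,b) k) - x)). split.
    + apply Rmin_pos; lra.
    + intros y Hy. 
      assert (fst (dseq (a,b) k) < y < snd (dseq (a,b) k)).
      { pose proof (Rmin_l (x - fst (dseq (a,b) k)) (snd (dseq (a,b) k) - x)).
        pose proof (Rmin_r (x - fst (dseq (a,b) k)) (snd (dseq (a,b) k) - x)). absr. }
      pose proof (hmono (fst (dseq (a,b) k)) y ltac:(lra)). pose proof (hmono y (snd (dseq (a,b) k)) ltac:(lra)).
      pose proof (hmono (fst (dseq (a,b) k)) x ltac:(lra)). pose proof (hmono x (snd (dseq (a,b) k)) ltac:(lra)).
      absr.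
Qed.
End DENSE.

Lemma cont_sum_l F G u : (forall s t, s <= t -> F s <= F t) -> (forall s t, s <= t -> G s <= G t) ->
  continuity_pt (fun x => F x + G x) u -> continuity_pt F u.
Proof.
  intros HF HG Hc. apply cont_intro. intros eps He. destruct (cont_elim _ _ Hc eps He) as [d [Hd H]].
  exists d; split; auto. intros y Hy. specialize (H y Hy).
  destruct (Rle_dec y u) as [Hyu|Hyu].
  - pose proof (HF _ _ Hyu); pose proof (HG _ _ Hyu). absr.
  - pose proof (HF u y ltac:(lra)); pose proof (HG u y ltac:(lra)). absr.
Qed.

Lemma dense_cont2 F G a b : Dplus F -> Dplus G -> a < b -> exists x, a < x < b /\ continuity_pt F x /\ continuity_pt G x.
Proof.
  intros HF HG Hab.
  destruct (dense_cont (fun x => F x + G x)) with a b as [x [Hx Hc]]; auto.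
  { intros s t Hst. pose proof (Dp_mono F s t HF Hst); pose proof (Dp_mono G s t HG Hst); lra. }
  exists x; split; auto. split.
  - apply cont_sum_l with G; auto; intros; apply Dp_mono; auto.
  - apply cont_sum_l with F; auto; try (intros; apply Dp_mono; auto).
    apply cont_intro; intros eps He; destruct (cont_elim _ _ Hc eps He) as [d [Hd H]].
    exists d; split; auto. intros y Hy; specialize (H y Hy). absr.
Qed.

Lemma W1 (Fn Gn : nat -> DF) F G N : Dplus F -> Dplus G -> wconv Fn F -> wconv Gn G ->
  (forall n, (N <= n)%nat -> fle (Fn n) (Gn n)) -> fle F G.
Proof.
  intros HF HG HFn HGn Hle t. apply Rnot_lt_le; intros Hc.
  destruct (Dp_lc F HF t ((F t - G t)/2)) as [d [Hd Hdel]]; [lra|].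
  destruct (dense_cont2 F G (t - d) t HF HG) as [u [Hu [HcF HcG]]]; [lra|].
  assert (F u <= G u).
  { apply (cv_le _ _ _ _ N (HFn u HcF) (HGn u HcG)). intros n Hn; apply Hle; auto. }
  specialize (Hdel u Hu). pose proof (Dp_mono G u t HG ltac:(lra)). absr.
Qed.

Lemma wconv_const F : wconv (fun _ => F) F.
Proof. intros t _. apply cv_const. Qed.

Lemma H0_cont t : 0 < t -> continuity_pt H0 t.
Proof.
  intros Ht. apply cont_intro. intros eps He. exists t. split; auto. intros y Hy.
  rewrite !H0_pos by absr. rewrite Rminus_diag, Rabs_R0; lra.
Qed.

Lemma wconv_H0_intro (Fn : nat -> DF) : (forall n, Dplus (Fn n)) ->
  (forall t, 0 < t -> forall eps, 0 < eps -> exists N, forall n, (N <= n)%nat -> 1 - eps < Fn n t) -> wconv Fn H0.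
Proof.
  intros HD H t _. destruct (Rle_dec t 0) as [Ht|Ht].
  - rewrite H0_npos by auto. intros eps He. exists 0%nat. intros n _. unfold Rdist. rewrite (Dp_neg (Fn n) t (HD n) Ht). rewrite Rminus_diag, Rabs_R0; lra.
  - rewrite H0_pos by lra. intros eps He. destruct (H t ltac:(lra) eps He) as [N HN]. exists N. intros n Hn.
    specialize (HN n Hn). pose proof (Dp_le1 (Fn n) t (HD n)). unfold Rdist. absr.
Qed.

Lemma wconv_H0_elim (Fn : nat -> DF) : wconv Fn H0 ->
  forall t, 0 < t -> forall eps, 0 < eps -> exists N, forall n, (N <= n)%nat -> 1 - eps < Fn n t.
Proof.
  intros H t Ht eps He. destruct (H t (H0_cont t Ht) eps He) as [N HN]. exists N. intros n Hn.
  specialize (HN n Hn). unfold Rdist in HN. rewrite H0_pos in HN by lra. absr.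
Qed.

Lemma wconv_H0_lower (Yn Xn : nat -> DF) N : (forall n, Dplus (Xn n)) -> (forall n, (N <= n)%nat -> fle (Yn n) (Xn n)) ->
  wconv Yn H0 -> wconv Xn H0.
Proof.
  intros HX Hle HY. apply wconv_H0_intro; auto. intros t Ht eps He.
  destruct (wconv_H0_elim Yn HY t Ht eps He) as [N1 H1]. exists (N + N1)%nat. intros n Hn.
  specialize (H1 n ltac:(lia)). specialize (Hle n ltac:(lia) t). lra.
Qed.

Lemma wconv_ext (Fn Gn : nat -> DF) F N : (forall n, (N <= n)%nat -> Fn n = Gn n) -> wconv Fn F -> wconv Gn F.
Proof.
  intros He H t Ht eps Heps. destruct (H t Ht eps Heps) as [N1 H1]. exists (N + N1)%nat. intros n Hn.
  rewrite <- He by lia. apply H1. lia.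
Qed.

Lemma wconv_sub (Fn : nat -> DF) F (phi : nat -> nat) : wconv Fn F -> (forall j, (j <= phi j)%nat) -> wconv (fun j => Fn (phi j)) F.
Proof. intros H Hp t Ht. apply (cv_sub (fun n => Fn n t)); auto. Qed.
From Stdlib Require Cantor.

Definition qe (n : nat) : R := let (m, i) := Cantor.of_nat n in INR i / (INR m + 1) - INR m.

Lemma qe_dense s t : s < t -> exists n, s < qe n < t.
Proof.
  intros Hst.
  destruct (archimed (Rmax (/(t - s)) (- s))) as [Hu _].
  set (m := Z.to_nat (up (Rmax (/(t - s)) (- s)))).
  assert (Hm1 : Rmax (/(t-s)) (-s) < INR m).
  { unfold m. rewrite INR_IZR_INZ, Z2Nat.id. lra. apply le_IZR.
    pose proof (Rmax_l (/(t-s)) (-s)). assert (0 < /(t-s)) by (apply Rinv_0_lt_compat; lra). lra. }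
  pose proof (Rmax_l (/(t-s)) (-s)). pose proof (Rmax_r (/(t-s)) (-s)).
  assert (HM : 0 < INR m + 1) by (pose proof (pos_INR m); lra).
  destruct (archimed ((s + INR m) * (INR m + 1))) as [Hz1 Hz2].
  set (i := Z.to_nat (up ((s + INR m) * (INR m + 1)))).
  assert (Hi : INR i = IZR (up ((s + INR m) * (INR m + 1)))).
  { unfold i. rewrite INR_IZR_INZ, Z2Nat.id. auto. apply le_IZR.
    assert (0 < (s + INR m) * (INR m + 1)) by (apply Rmult_lt_0_compat; lra). lra. }
  exists (Cantor.to_nat (m, i)). unfold qe. rewrite Cantor.cancel_of_to.
  assert (Hts : / (t - s) < INR m + 1) by lra.
  assert (1 < (t - s) * (INR m + 1)).
  { apply Rmult_lt_compat_l with (r := t - s) in Hts; [|lra]. rewrite Rinv_r in Hts; lra. }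
  split.
  - apply Rle_lt_trans with ((s + INR m) * (INR m + 1) / (INR m + 1) - INR m).
    + right. field. lra.
    + unfold Rdiv. apply Rplus_lt_compat_r. apply Rmult_lt_compat_r. apply Rinv_0_lt_compat; lra. lra.
  - apply Rle_lt_trans with (((s + INR m) * (INR m + 1) + 1) / (INR m + 1) - INR m).
    + unfold Rdiv. apply Rplus_le_compat_r. apply Rmult_le_compat_r. left; apply Rinv_0_lt_compat; lra. lra.
    + replace (((s + INR m) * (INR m + 1) + 1) / (INR m + 1) - INR m) with (s + /(INR m + 1)) by (field; lra).
      assert (/(INR m + 1) < t - s).
      { apply Rmult_lt_reg_r with (INR m + 1); auto. rewrite Rinv_l by lra. lra. }
      lra.
Qed.

Definition incr (phi : nat -> nat) : Prop := forall j, (phi j < phi (S j))%nat.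
Lemma incr_lt phi a b : incr phi -> (a < b)%nat -> (phi a < phi b)%nat.
Proof. intros H Hab. induction Hab. apply H. specialize (H m). lia. Qed.
Lemma incr_ge phi j : incr phi -> (j <= phi j)%nat.
Proof. intros H. induction j. lia. specialize (H j). lia. Qed.
Lemma incr_comp phi psi : incr phi -> incr psi -> incr (fun j => phi (psi j)).
Proof. intros H1 H2 j. apply incr_lt; auto. Qed.

Lemma inv_small eps : 0 < eps -> exists k : nat, forall j, (k <= j)%nat -> / (INR j + 1) < eps.
Proof.
  intros He. destruct (archimed (/eps)) as [Hu _].
  exists (Z.to_nat (up (/eps))). intros j Hj.
  assert (0 < /eps) by (apply Rinv_0_lt_compat; lra).
  assert (/eps < INR j + 1).
  { apply le_INR in Hj. rewrite INR_IZR_INZ, Z2Nat.id in Hj. lra. apply le_IZR; lra. }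
  rewrite <- (Rinv_inv eps). apply Rinv_lt_contravar; auto. apply Rmult_lt_0_compat; lra.
Qed.

Lemma BW_ext (u : nat -> R) : exists phi, incr phi /\ ((forall n, 0 <= u n <= 1) -> exists l, Un_cv (fun j => u (phi j)) l).
Proof.
  destruct (classic (forall n, 0 <= u n <= 1)) as [Hb|Hb].
  2:{ exists (fun j => j). split. intros j; lia. intros H; tauto. }
  destruct (Bolzano_Weierstrass u (fun c => 0 <= c <= 1) (compact_P3 0 1) Hb) as [l Hl].
  assert (Hn : forall N k, exists p, (N <= p)%nat /\ Rabs (u p - l) < / (INR k + 1)).
  { intros N k. assert (Hpos : 0 < / (INR k + 1)) by (apply Rinv_0_lt_compat; pose proof (pos_INR k); lra).
    destruct (Hl (disc l (mkposreal _ Hpos)) N) as [p [Hp Hd]].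
    - exists (mkposreal _ Hpos). intros y Hy; exact Hy.
    - exists p; split; auto. }
  set (next := fun N k => proj1_sig (constructive_indefinite_description _ (Hn N k))).
  assert (Hnext : forall N k, (N <= next N k)%nat /\ Rabs (u (next N k) - l) < / (INR k + 1)).
  { intros N k. unfold next. destruct (constructive_indefinite_description _ _) as [p Hp]; simpl; auto. }
  set (phi := fix phi j := match j with O => next O O | S j => next (S (phi j)) (S j) end).
  exists phi. split.
  - intros j. simpl. destruct (Hnext (S (phi j)) (S j)). lia.
  - intros _. exists l. intros eps He. destruct (inv_small eps He) as [k Hk]. exists k. intros j Hj.
    unfold Rdist. destruct j as [|j].
    + simpl. destruct (Hnext 0%nat 0%nat) as [_ H]. specialize (Hk 0%nat Hj). lra.
    + simpl. destruct (Hnext (S (phi j)) (S j)) as [_ H]. specialize (Hk (S j) Hj). lra.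
Qed.

Section HELLY.
Variable Fs : nat -> DF.
Hypothesis HFs : forall n, Dplus (Fs n).

Definition ext (u : nat -> R) : nat -> nat := proj1_sig (constructive_indefinite_description _ (BW_ext u)).
Lemma ext_spec u : incr (ext u) /\ ((forall n, 0 <= u n <= 1) -> exists l, Un_cv (fun j => u (ext u j)) l).
Proof. unfold ext. destruct (constructive_indefinite_description _ _); simpl; auto. Qed.

Fixpoint Phi (k : nat) : nat -> nat :=
  match k with
  | O => fun n => n
  | S k => fun n => Phi k (ext (fun m => Fs (Phi k m) (qe k)) n)
  end.

Lemma Phi_incr k : incr (Phi k).
Proof.
  induction k as [|k IH]. intros j; simpl; lia.
  intros j. simpl. apply incr_lt; auto. apply (ext_spec (fun m => Fs (Phi k m) (qe k))).
Qed.

Lemma Phi_sub k j : (k <= j)%nat -> forall n, exists m, (n <= m)%nat /\ Phi j n = Phi k m.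
Proof.
  intros Hkj. induction Hkj as [|j Hkj IH]; intros n. exists n; split; auto.
  simpl. destruct (IH (ext (fun m => Fs (Phi j m) (qe j)) n)) as [m [Hm Hm']].
  exists m; split; auto. pose proof (incr_ge _ n (proj1 (ext_spec (fun m => Fs (Phi j m) (qe j))))). lia.
Qed.

Lemma Phi_cv k : exists l, Un_cv (fun m => Fs (Phi (S k) m) (qe k)) l.
Proof.
  simpl. apply (ext_spec (fun m => Fs (Phi k m) (qe k))). intros n; split. apply Dp_nonneg; auto. apply Dp_le1; auto.
Qed.

Definition psi (j : nat) : nat := Phi (S j) j.

Lemma psi_incr : incr psi.
Proof.
  intros j. unfold psi. change (Phi (S (S j)) (S j)) with (Phi (S j) (ext (fun m => Fs (Phi (S j) m) (qe (S j))) (S j))).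
  apply incr_lt. apply Phi_incr. pose proof (incr_ge _ (S j) (proj1 (ext_spec (fun m => Fs (Phi (S j) m) (qe (S j)))))). lia.
Qed.

Lemma psi_cv k : exists l, Un_cv (fun j => Fs (psi j) (qe k)) l.
Proof.
  destruct (Phi_cv k) as [l Hl]. exists l. intros eps He. destruct (Hl eps He) as [N HN].
  exists (S k + N)%nat. intros j Hj. unfold psi. destruct (Phi_sub (S k) (S j) ltac:(lia) j) as [m [Hm ->]].
  apply HN. lia.
Qed.

Definition gl (k : nat) : R := proj1_sig (constructive_indefinite_description _ (psi_cv k)).
Lemma gl_spec k : Un_cv (fun j => Fs (psi j) (qe k)) (gl k).
Proof. unfold gl. destruct (constructive_indefinite_description _ _); simpl; auto. Qed.

Lemma gl_bnd k : 0 <= gl k <= 1.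
Proof.
  split. apply (cv_ge_const _ _ 0 0 (gl_spec k)). intros; apply Dp_nonneg; auto.
  apply (cv_le_const _ _ 1 0 (gl_spec k)). intros; apply Dp_le1; auto.
Qed.

Definition HF (t : R) : R := Rsup (fun y => exists k, qe k < t /\ y = gl k).

Lemma HF_bnd t : forall y, (exists k, qe k < t /\ y = gl k) -> y <= 1.
Proof. intros y [k [_ ->]]. apply gl_bnd. Qed.
Lemma HF_ge k t : qe k < t -> gl k <= HF t.
Proof. intros H. unfold HF. apply Rsup_ub with 1. apply HF_bnd. eauto. Qed.
Lemma HF_ge0 t : 0 <= HF t.
Proof. apply Rsup_ge0 with 1. apply HF_bnd. Qed.
Lemma HF_le t M : (forall k, qe k < t -> gl k <= M) -> 0 <= M -> HF t <= M.
Proof. intros H HM. apply Rsup_le; auto. intros y [k [Hk ->]]; auto. Qed.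
Lemma HF_mono s t : s <= t -> HF s <= HF t.
Proof. intros Hst. apply HF_le. intros k Hk. apply HF_ge. lra. apply HF_ge0. Qed.
Lemma HF_approx t eps : 0 < eps -> HF t - eps < 0 \/ exists k, qe k < t /\ HF t - eps < gl k.
Proof.
  intros He. destruct (Rsup_approx _ 1 eps (HF_bnd t) He) as [H|[y [[k [Hk ->]] Hy]]]; auto.
  right; exists k; auto.
Qed.

Lemma HF_Dp : Dplus HF.
Proof.
  split; [|split; [|split]].
  - intros t; split. apply HF_ge0. apply HF_le; [|lra]. intros; apply gl_bnd.
  - apply HF_mono.
  - intros t eps He. destruct (HF_approx t eps He) as [H|[k [Hk1 Hk2]]].
    + exists 1; split; [lra|]. intros s Hs. pose proof (HF_mono s t ltac:(lra)). pose proof (HF_ge0 s). absr.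
    + exists (t - qe k); split; [lra|]. intros s Hs. pose proof (HF_mono s t ltac:(lra)). pose proof (HF_ge k s ltac:(lra)). absr.
  - apply Rle_antisym; [|apply HF_ge0]. apply HF_le; [|lra]. intros k Hk.
    apply (cv_le_const _ _ 0 0 (gl_spec k)). intros n _. rewrite Dp_neg; auto; lra.
Qed.

Lemma HF_conv : wconv (fun j => Fs (psi j)) HF.
Proof.
  intros t Hc eps He. destruct (cont_elim _ _ Hc (eps/4)) as [d [Hd Hdel]]; [lra|].
  assert (Hlow : exists N1, forall j, (N1 <= j)%nat -> HF t - eps < Fs (psi j) t).
  { destruct (HF_approx (t - d/2) (eps/4)) as [H|[k [Hk1 Hk2]]]; [lra| |].
    - exists 0%nat. intros j _. specialize (Hdel (t - d/2) ltac:(absr)). pose proof (Dp_nonneg (Fs (psi j)) t (HFs _)). absr.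
    - destruct (gl_spec k (eps/4)) as [N1 HN1]; [lra|]. exists N1. intros j Hj. specialize (HN1 j Hj). unfold Rdist in HN1.
      specialize (Hdel (t - d/2) ltac:(absr)). pose proof (Dp_mono (Fs (psi j)) (qe k) t (HFs _) ltac:(lra)). absr. }
  assert (Hup : exists N2, forall j, (N2 <= j)%nat -> Fs (psi j) t < HF t + eps).
  { destruct (qe_dense t (t + d/2)) as [k [Hk1 Hk2]]; [lra|].
    destruct (qe_dense (qe k) (t + d/2)) as [k' [Hk1' Hk2']]; [lra|].
    pose proof (HF_ge k (qe k') Hk1'). specialize (Hdel (qe k') ltac:(absr)).
    destruct (gl_spec k (eps/4)) as [N2 HN2]; [lra|]. exists N2. intros j Hj. specialize (HN2 j Hj). unfold Rdist in HN2.
    pose proof (Dp_mono (Fs (psi j)) t (qe k) (HFs _) ltac:(lra)). absr. }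
  destruct Hlow as [N1 H1]; destruct Hup as [N2 H2]. exists (N1 + N2)%nat. intros j Hj. unfold Rdist.
  specialize (H1 j ltac:(lia)); specialize (H2 j ltac:(lia)). absr.
Qed.

End HELLY.

Lemma Helly (Fs : nat -> DF) : (forall n, Dplus (Fs n)) ->
  exists phi, incr phi /\ exists F, Dplus F /\ wconv (fun j => Fs (phi j)) F.
Proof.
  intros H. exists (psi Fs). split. apply psi_incr. exists (HF Fs H). split. apply HF_Dp; auto. apply HF_conv; auto.
Qed.
Definition CauchyH0 (E : nat -> nat -> DF) : Prop :=
  forall t, continuity_pt H0 t -> forall eps, 0 < eps ->
    exists N, forall n p, (N <= n)%nat -> (N <= p)%nat -> Rabs (E n p t - H0 t) < eps.

Lemma cauchy_pairs E nj pj : CauchyH0 E -> (forall j, (j <= nj j)%nat) -> (forall j, (j <= pj j)%nat) ->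
  wconv (fun j => E (nj j) (pj j)) H0.
Proof.
  intros HE Hn Hp t Ht eps He. destruct (HE t Ht eps He) as [N HN]. exists N. intros j Hj.
  unfold Rdist. apply HN. specialize (Hn j); lia. specialize (Hp j); lia.
Qed.

Lemma pairs_cauchy E : (forall n p, Dplus (E n p)) ->
  (forall nj pj, (forall j, (j <= nj j)%nat) -> (forall j, (j <= pj j)%nat) -> wconv (fun j => E (nj j) (pj j)) H0) ->
  CauchyH0 E.
Proof.
  intros HD H t Ht eps He. destruct (Rle_dec t 0) as [Ht0|Ht0].
  { exists 0%nat. intros. rewrite (H0_npos t Ht0), (Dp_neg (E n p) t (HD n p) Ht0). rewrite Rminus_0_r, Rabs_R0; lra. }
  apply NNPP; intros Hn.
  assert (Hb : forall N, exists np, (N <= fst np)%nat /\ (N <= snd np)%nat /\ eps <= Rabs (E (fst np) (snd np) t - H0 t)).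
  { intros N. apply NNPP; intros H1. apply Hn. exists N. intros n p Hnn Hpp. apply Rnot_le_lt. intros H2. apply H1.
    exists (n, p). simpl; auto. }
  set (np := fun N => proj1_sig (constructive_indefinite_description _ (Hb N))).
  assert (Hnp : forall N, (N <= fst (np N))%nat /\ (N <= snd (np N))%nat /\ eps <= Rabs (E (fst (np N)) (snd (np N)) t - H0 t)).
  { intros N. unfold np. destruct (constructive_indefinite_description _ _); simpl; auto. }
  specialize (H (fun j => fst (np j)) (fun j => snd (np j)) (fun j => proj1 (Hnp j)) (fun j => proj1 (proj2 (Hnp j)))).
  destruct (H t Ht eps He) as [N HN]. specialize (HN N (le_n N)). destruct (Hnp N) as [_ [_ Hc]]. unfold Rdist in HN. lra.
Qed.

Section STAR.
Variable star : DF -> DF -> DF.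
Hypothesis Htf : triangle_function star.
Hypothesis Hcont : star_continuous star.

Lemma st_Dp F L : Dplus F -> Dplus L -> Dplus (star F L).
Proof. destruct Htf as [H _]. apply H. Qed.
Lemma st_comm F L : Dplus F -> Dplus L -> star F L = star L F.
Proof. destruct Htf as [_ [H _]]. apply H. Qed.
Lemma st_assoc F L M : Dplus F -> Dplus L -> Dplus M -> star (star F L) M = star F (star L M).
Proof. destruct Htf as [_ [_ [H _]]]. apply H. Qed.
Lemma st_mono_l F F' L : Dplus F -> Dplus F' -> Dplus L -> fle F F' -> fle (star F L) (star F' L).
Proof. destruct Htf as [_ [_ [_ [H _]]]]. apply H. Qed.
Lemma st_mono_r F L L' : Dplus F -> Dplus L -> Dplus L' -> fle L L' -> fle (star F L) (star F L').
Proof. destruct Htf as [_ [_ [_ [_ [H _]]]]]. apply H. Qed.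
Lemma st_H0r F : Dplus F -> star F H0 = F.
Proof. destruct Htf as [_ [_ [_ [_ [_ H]]]]]. apply H. Qed.
Lemma st_H0l F : Dplus F -> star H0 F = F.
Proof. intros. rewrite st_comm; auto using H0_Dp. apply st_H0r; auto. Qed.
Lemma st_mono F F' L L' : Dplus F -> Dplus F' -> Dplus L -> Dplus L' -> fle F F' -> fle L L' -> fle (star F L) (star F' L').
Proof. intros. apply fle_trans with (star F' L). apply st_mono_l; auto. apply st_mono_r; auto. Qed.
Lemma st_Hinf_l X : Dplus X -> fle (star Hinf X) Hinf.
Proof.
  intros HX. rewrite <- (st_H0r Hinf) at 2 by apply Hinf_Dp. apply st_mono_r; auto using Hinf_Dp, H0_Dp, Dp_leH0.
Qed.
Lemma st_Hinf_r X : Dplus X -> fle (star X Hinf) Hinf.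
Proof. intros HX. rewrite st_comm; auto using Hinf_Dp. apply st_Hinf_l; auto. Qed.

Lemma st_cont (Fn Ln : nat -> DF) F L : (forall n, Dplus (Fn n)) -> (forall n, Dplus (Ln n)) -> Dplus F -> Dplus L ->
  wconv Fn F -> wconv Ln L -> wconv (fun n => star (Fn n) (Ln n)) (star F L).
Proof. apply Hcont. Qed.

Lemma lemC (Fn : nat -> DF) (E : nat -> nat -> DF) : (forall n, Dplus (Fn n)) -> (forall n m, Dplus (E n m)) ->
  (forall n m, fle (star (E n m) (Fn m)) (Fn n)) -> CauchyH0 E -> exists F, Dplus F /\ wconv Fn F.
Proof.
  intros HF HE Hle HC.
  destruct (Helly Fn HF) as [phi [Hphi [F [HFD HFc]]]].
  exists F; split; auto.
  intros t Hc. destruct (classic (Un_cv (fun n => Fn n t) (F t))) as [|Hn]; auto. exfalso.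
  assert (Hb : exists eps, 0 < eps /\ forall N, exists n, (N <= n)%nat /\ eps <= Rdist (Fn n t) (F t)).
  { apply NNPP; intro H1. apply Hn. intros eps He. apply NNPP; intro H2. apply H1. exists eps; split; auto.
    intros N. apply NNPP; intro H3. apply H2. exists N. intros n Hn'. apply Rnot_le_lt. intro H4. apply H3. exists n; auto. }
  destruct Hb as [eps [He Hb]].
  set (ps := fun N => proj1_sig (constructive_indefinite_description _ (Hb N))).
  assert (Hps : forall N, (N <= ps N)%nat /\ eps <= Rdist (Fn (ps N) t) (F t)).
  { intros N. unfold ps. destruct (constructive_indefinite_description _ _); simpl; auto. }
  destruct (Helly (fun j => Fn (ps j)) (fun j => HF _)) as [chi [Hchi [F' [HF'D HF'c]]]].
  assert (Hn1 : forall j, (j <= phi j)%nat) by (intros; apply incr_ge; auto).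
  assert (Hn2 : forall j, (j <= ps (chi j))%nat).
  { intros j. pose proof (incr_ge chi j Hchi). pose proof (proj1 (Hps (chi j))). lia. }
  assert (A1 : fle F' F).
  { apply (W1 (fun j => star (E (phi j) (ps (chi j))) (Fn (ps (chi j)))) (fun j => Fn (phi j)) F' F 0).
    - exact HF'D.
    - exact HFD.
    - rewrite <- (st_H0l F') by auto. apply st_cont; auto. apply H0_Dp. apply cauchy_pairs; auto.
    - exact HFc.
    - intros; apply Hle. }
  assert (A2 : fle F F').
  { apply (W1 (fun j => star (E (ps (chi j)) (phi j)) (Fn (phi j))) (fun j => Fn (ps (chi j))) F F' 0).
    - exact HFD.
    - exact HF'D.
    - rewrite <- (st_H0l F) by auto. apply st_cont; auto. apply H0_Dp. apply cauchy_pairs; auto.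
    - exact HF'c.
    - intros; apply Hle. }
  pose proof (fle_antisym _ _ A1 A2) as Heq. subst F'.
  destruct (HF'c t Hc eps He) as [N HN]. specialize (HN N (le_n N)). destruct (Hps (chi N)) as [_ Hc2]. lra.
Qed.

End STAR.
Section GSEC.
Variable G : Type.
Variable D : G -> G -> DF.
Variable star : DF -> DF -> DF.
Hypothesis HPM : PMspace G D star.
Hypothesis Hcont : star_continuous star.

Lemma Htf : triangle_function star.
Proof. apply HPM. Qed.
Lemma HDp p q : Dplus (D p q).
Proof. apply HPM. Qed.
Lemma Hid p q : D p q = H0 <-> p = q.
Proof. apply HPM. Qed.
Lemma Hsym p q : D p q = D q p.
Proof. apply HPM. Qed.
Lemma Htri p q r : fle (star (D p q) (D q r)) (D p r).
Proof. apply HPM. Qed.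
Lemma Drefl p : D p p = H0.
Proof. apply Hid; auto. Qed.

Hint Resolve HDp H0_Dp Hinf_Dp : dp.

Lemma Lip_Dp f x : isLip G D star f -> Dplus (f x).
Proof. intros [H _]; auto. Qed.
Lemma Lip_le f x y : isLip G D star f -> fle (star (D x y) (f y)) (f x).
Proof. intros [_ H]; auto. Qed.
Lemma Pi_Lip f : inPi G D star f -> isLip G D star f.
Proof. intros [H _]; auto. Qed.

Lemma sDp F L : Dplus F -> Dplus L -> Dplus (star F L).
Proof. apply st_Dp, Htf. Qed.
Lemma scont (Fn Ln : nat -> DF) F L : (forall n, Dplus (Fn n)) -> (forall n, Dplus (Ln n)) -> Dplus F -> Dplus L ->
  wconv Fn F -> wconv Ln L -> wconv (fun n => star (Fn n) (Ln n)) (star F L).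
Proof. apply Hcont. Qed.

Lemma wconv_unique (Fn : nat -> DF) F F' : Dplus F -> Dplus F' -> wconv Fn F -> wconv Fn F' -> F = F'.
Proof.
  intros. apply fle_antisym; apply (W1 Fn Fn _ _ 0); auto; intros; apply fle_refl.
Qed.

Lemma Pi_pair f x y : inPi G D star f -> fle (star (f x) (f y)) (D x y).
Proof.
  intros [HL [a [Ha Hc]]].
  apply (W1 (fun n => star (D (a n) x) (D (a n) y)) (fun _ => D x y) _ _ 0).
  - apply sDp; apply Lip_Dp; auto.
  - auto with dp.
  - apply scont; auto with dp; apply Lip_Dp; auto.
  - apply wconv_const.
  - intros n _. rewrite (Hsym (a n) x). apply Htri.
Qed.

Lemma Pi_aH0 f a : isLip G D star f -> Cauchy_seq G D a -> (forall x, wconv (fun n => D (a n) x) (f x)) ->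
  wconv (fun n => f (a n)) H0.
Proof.
  intros HL Ha Hc. apply wconv_H0_intro. intros; apply Lip_Dp; auto.
  intros t Ht eps He.
  destruct (Ha (t/2) (H0_cont (t/2) ltac:(lra)) (eps/2) ltac:(lra)) as [N HN].
  exists N. intros n Hn.
  destruct (dense_cont2 (f (a n)) (f (a n)) (t/2) t) as [u [Hu [Hcu _]]]; try apply Lip_Dp; auto; try lra.
  assert (1 - eps/2 <= f (a n) u).
  { apply (cv_ge_const _ _ _ N (Hc (a n) u Hcu)). intros p Hp. specialize (HN p n Hp Hn).
    rewrite H0_pos in HN by lra. pose proof (Dp_mono (D (a p) (a n)) (t/2) u (HDp _ _) ltac:(lra)). absr. }
  pose proof (Dp_mono (f (a n)) u t (Lip_Dp _ _ HL) ltac:(lra)). lra.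
Qed.

Lemma DD_Dp f g : isLip G D star f -> isLip G D star g -> Dplus (DD G star f g).
Proof. intros. unfold DD. apply fsup_Dp. intros; apply sDp; apply Lip_Dp; auto. Qed.
Lemma DD_ge f g x : isLip G D star f -> isLip G D star g -> fle (star (f x) (g x)) (DD G star f g).
Proof. intros Hf Hg t. unfold DD. apply (fsup_ge (fun x => star (f x) (g x))). intros; apply sDp; apply Lip_Dp; auto. Qed.
Lemma DD_comm f g : isLip G D star f -> isLip G D star g -> DD G star f g = DD G star g f.
Proof.
  intros Hf Hg. unfold DD. f_equal. apply functional_extensionality. intros x. apply st_comm. apply Htf. all: apply Lip_Dp; auto.
Qed.

Lemma DD_lim f g a : isLip G D star f -> isLip G D star g -> Cauchy_seq G D a -> (forall x, wconv (fun n => D (a n) x) (f x)) ->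
  wconv (fun k => star (f (a k)) (g (a k))) (DD G star f g).
Proof.
  intros Hf Hg Ha Hc t _ eps He.
  set (S := DD G star f g). assert (HS : Dplus S) by (apply DD_Dp; auto).
  assert (Hup : forall k, star (f (a k)) (g (a k)) t <= S t) by (intros; apply DD_ge; auto).
  assert (HT : forall k, Dplus (star (f (a k)) (g (a k)))) by (intros; apply sDp; apply Lip_Dp; auto).
  destruct (Dp_lc S HS t (eps/3)) as [d [Hd Hdel]]; [lra|].
  specialize (Hdel (t - d/2) ltac:(lra)).
  destruct (fsup_approx (fun x => star (f x) (g x)) (fun x => sDp _ _ (Lip_Dp f x Hf) (Lip_Dp g x Hg)) (t - d/2) (eps/3)) as [H|[x Hx]]; [lra| |].
  - exists 0%nat. intros k _. unfold Rdist. pose proof (Hup k). pose proof (Dp_nonneg _ t (HT k)). change (fsup (fun x => star (f x) (g x))) with S in H. absr.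
  - change (fsup (fun x => star (f x) (g x))) with S in Hx. set (Hxx := star (f x) (g x)). assert (HHx : Dplus Hxx) by (apply sDp; apply Lip_Dp; auto).
    destruct (dense_cont2 Hxx Hxx (t - d/2) t HHx HHx) as [u [Hu [Hcu _]]]; [lra|].
    assert (Hlow : wconv (fun k => star (f (a k)) (star (D (a k) x) (g x))) Hxx).
    { unfold Hxx. rewrite <- (st_H0l star Htf (star (f x) (g x))) by (apply sDp; apply Lip_Dp; auto).
      apply scont.
      - intros; apply Lip_Dp; auto.
      - intros; apply sDp; auto with dp; apply Lip_Dp; auto.
      - auto with dp.
      - apply sDp; apply Lip_Dp; auto.
      - apply (Pi_aH0 f a); auto.
      - apply scont.
        + intros; auto with dp.
        + intros; apply Lip_Dp; auto.
        + apply Lip_Dp; auto.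
        + apply Lip_Dp; auto.
        + exact (Hc x).
        + apply wconv_const. }
    destruct (Hlow u Hcu (eps/3)) as [N HN]; [lra|]. exists N. intros k Hk. specialize (HN k Hk). unfold Rdist in *.
    assert (star (f (a k)) (star (D (a k) x) (g x)) u <= star (f (a k)) (g (a k)) u).
    { apply (st_mono_r star Htf); try apply Lip_Dp; auto. apply sDp; auto with dp; apply Lip_Dp; auto. apply Lip_le; auto. }
    pose proof (Dp_mono _ u t (HT k) ltac:(lra)). pose proof (Dp_mono _ (t - d/2) u HHx ltac:(lra)).
    pose proof (Hup k). unfold Hxx in *. absr.
Qed.

Lemma K1 f g y : inPi G D star f -> inPi G D star g -> fle (star (DD G star f g) (g y)) (f y).
Proof.
  intros Hf Hg. pose proof (Pi_Lip _ Hf) as HLf. pose proof (Pi_Lip _ Hg) as HLg.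
  destruct Hf as [_ [a [Ha Hc]]].
  apply (W1 (fun k => star (star (f (a k)) (g (a k))) (g y)) (fun _ => f y) _ _ 0).
  - apply sDp. apply DD_Dp; auto. apply Lip_Dp; auto.
  - apply Lip_Dp; auto.
  - apply scont; try (intros; apply sDp; apply Lip_Dp; auto); try (intros; apply Lip_Dp; auto); try apply DD_Dp; auto.
    apply DD_lim; auto. apply wconv_const.
  - apply wconv_const.
  - intros k _. set (x := a k).
    rewrite (st_assoc star Htf) by (apply Lip_Dp; auto).
    apply fle_trans with (star (f x) (D x y)).
    + apply (st_mono_r star Htf); auto with dp. apply Lip_Dp; auto. apply sDp; apply Lip_Dp; auto. apply Pi_pair; auto.
    + rewrite (st_comm star Htf) by (auto with dp; apply Lip_Dp; auto). rewrite Hsym. apply Lip_le; auto.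
Qed.

Lemma DD_self f : inPi G D star f -> DD G star f f = H0.
Proof.
  intros Hf. pose proof (Pi_Lip _ Hf) as HL. destruct Hf as [_ [a [Ha Hc]]].
  apply (wconv_unique (fun k => star (f (a k)) (f (a k)))).
  - apply DD_Dp; auto.
  - auto with dp.
  - apply DD_lim; auto.
  - rewrite <- (st_H0l star Htf H0) by auto with dp. apply scont; auto with dp; try (intros; apply Lip_Dp; auto);
    apply (Pi_aH0 f a); auto.
Qed.

Lemma DD_sep f g : inPi G D star f -> inPi G D star g -> DD G star f g = H0 -> f = g.
Proof.
  intros Hf Hg H. apply functional_extensionality. intros y. apply fle_antisym.
  - pose proof (K1 g f y Hg Hf). rewrite DD_comm, H, (st_H0l star Htf) in H0; auto using Pi_Lip. apply Lip_Dp, Pi_Lip; auto.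
  - pose proof (K1 f g y Hf Hg). rewrite H, (st_H0l star Htf) in H0; auto. apply Lip_Dp, Pi_Lip; auto.
Qed.

Lemma DD_tri f g h : inPi G D star f -> inPi G D star g -> inPi G D star h ->
  fle (star (DD G star f g) (DD G star g h)) (DD G star f h).
Proof.
  intros Hf Hg Hh. pose proof (Pi_Lip _ Hf) as Lf. pose proof (Pi_Lip _ Hg) as Lg. pose proof (Pi_Lip _ Hh) as Lh.
  pose proof Hf as [_ [a [Ha Hca]]]. pose proof Hh as [_ [c [Hc Hcc]]].
  apply (W1 (fun k => star (star (f (a k)) (g (a k))) (star (h (c k)) (g (c k)))) (fun _ => DD G star f h) _ _ 0).
  - apply sDp; apply DD_Dp; auto.
  - apply DD_Dp; auto.
  - rewrite (DD_comm g h) by auto. apply scont; try (intros; apply sDp; apply Lip_Dp; auto); try apply DD_Dp; auto; apply DD_lim; auto.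
  - apply wconv_const.
  - intros k _. set (x := a k). set (y := c k).
    assert (Dx : forall z, Dplus (f z)) by (intros; apply Lip_Dp; auto).
    assert (Dg : forall z, Dplus (g z)) by (intros; apply Lip_Dp; auto).
    assert (Dh : forall z, Dplus (h z)) by (intros; apply Lip_Dp; auto).
    rewrite (st_comm star Htf (h y) (g y)) by auto.
    rewrite (st_assoc star Htf) by (auto; apply sDp; auto).
    rewrite <- (st_assoc star Htf (g x) (g y) (h y)) by auto.
    apply fle_trans with (star (f x) (h x)); [|apply DD_ge; auto].
    apply (st_mono_r star Htf); auto. apply sDp; auto. apply sDp; auto.
    apply fle_trans with (star (D x y) (h y)); [|apply Lip_le; auto].
    apply (st_mono_l star Htf); auto with dp. apply sDp; auto. apply Pi_pair; auto.
Qed.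


Lemma LipT_eq (f g : LipT G D star) : proj1_sig f = proj1_sig g -> f = g.
Proof. destruct f as [f Hf], g as [g Hg]; simpl. intros ->. f_equal. apply proof_irrelevance. Qed.

Lemma Dbar_Pi f g : inPi G D star f -> inPi G D star g -> Dbar G D star f g = DD G star f g.
Proof. intros. unfold Dbar. destruct (excluded_middle_informative _) as [_|Hn]; [reflexivity|tauto]. Qed.
Lemma Dbar_nPi_eq f : ~ inPi G D star f -> Dbar G D star f f = H0.
Proof.
  intros H. unfold Dbar. destruct (excluded_middle_informative _) as [Hp|_]; [tauto|].
  destruct (excluded_middle_informative _) as [_|Hn]; [reflexivity|tauto].
Qed.
Lemma Dbar_nPi_neq f g : ~ (inPi G D star f /\ inPi G D star g) -> f <> g -> Dbar G D star f g = Hinf.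
Proof.
  intros H Hne. unfold Dbar. destruct (excluded_middle_informative _) as [Hp|_]; [tauto|].
  destruct (excluded_middle_informative _) as [Hq|_]; [tauto|reflexivity].
Qed.
Lemma Dbar_self f : Dbar G D star f f = H0.
Proof.
  destruct (classic (inPi G D star f)) as [H|H]. rewrite Dbar_Pi by auto. apply DD_self; auto. apply Dbar_nPi_eq; auto.
Qed.
Lemma Dbar_Dp f g : isLip G D star f -> isLip G D star g -> Dplus (Dbar G D star f g).
Proof.
  intros Hf Hg. destruct (classic (inPi G D star f /\ inPi G D star g)) as [[A B]|H].
  - rewrite Dbar_Pi by auto. apply DD_Dp; auto.
  - destruct (classic (f = g)) as [<-|Hne]. rewrite Dbar_self; apply H0_Dp. rewrite Dbar_nPi_neq by auto. apply Hinf_Dp.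
Qed.
Lemma Dbar_comm f g : isLip G D star f -> isLip G D star g -> Dbar G D star f g = Dbar G D star g f.
Proof.
  intros Hf Hg. destruct (classic (inPi G D star f /\ inPi G D star g)) as [[A B]|H].
  - rewrite !Dbar_Pi by auto. apply DD_comm; auto.
  - destruct (classic (f = g)) as [<-|Hne]. reflexivity.
    rewrite !Dbar_nPi_neq; auto. tauto.
Qed.
Lemma Dbar_H0 f g : isLip G D star f -> isLip G D star g -> Dbar G D star f g = H0 -> f = g.
Proof.
  intros Hf Hg H. destruct (classic (inPi G D star f /\ inPi G D star g)) as [[A B]|Hn].
  - rewrite Dbar_Pi in H by auto. apply DD_sep; auto.
  - destruct (classic (f = g)) as [E|Hne]; auto. rewrite Dbar_nPi_neq in H by auto. exfalso; apply H0_neq_Hinf; auto.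
Qed.
Lemma Dbar_tri f g h : isLip G D star f -> isLip G D star g -> isLip G D star h ->
  fle (star (Dbar G D star f g) (Dbar G D star g h)) (Dbar G D star f h).
Proof.
  intros Hf Hg Hh.
  destruct (classic (f = g)) as [<-|Hfg].
  { rewrite Dbar_self, (st_H0l star Htf) by (apply Dbar_Dp; auto). apply fle_refl. }
  destruct (classic (g = h)) as [<-|Hgh].
  { rewrite Dbar_self, (st_H0r star Htf) by (apply Dbar_Dp; auto). apply fle_refl. }
  destruct (classic (inPi G D star f /\ inPi G D star g)) as [[A B]|H1].
  2:{ rewrite (Dbar_nPi_neq f g) by auto. eapply fle_trans. apply st_Hinf_l. apply Htf. apply Dbar_Dp; auto.
      intros t; unfold Hinf; apply Dp_nonneg; apply Dbar_Dp; auto. }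
  destruct (classic (inPi G D star g /\ inPi G D star h)) as [[_ C]|H2].
  2:{ rewrite (Dbar_nPi_neq g h) by auto. eapply fle_trans. apply st_Hinf_r. apply Htf. apply Dbar_Dp; auto.
      intros t; unfold Hinf; apply Dp_nonneg; apply Dbar_Dp; auto. }
  rewrite !Dbar_Pi by auto. apply DD_tri; auto.
Qed.

Lemma delta_Lip a : isLip G D star (delta G D a).
Proof. split. intros; apply HDp. intros x y. unfold delta. apply Htri. Qed.
Lemma delta_Pi a : inPi G D star (delta G D a).
Proof.
  split. apply delta_Lip. exists (fun _ => a). split.
  - intros t Ht eps He. exists 0%nat. intros. rewrite Drefl, Rminus_diag, Rabs_R0; lra.
  - intros x. unfold delta. rewrite Hsym. apply wconv_const.
Qed.
Lemma Dbar_delta a b : Dbar G D star (delta G D a) (delta G D b) = D a b.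
Proof.
  rewrite Dbar_Pi by apply delta_Pi. unfold DD, delta. apply functional_extensionality. intros t.
  assert (HF : forall x, Dplus (star (D x a) (D x b))) by (intros; apply sDp; apply HDp).
  apply Rle_antisym.
  - apply fsup_le; auto. intros x. rewrite (Hsym x a). apply Htri. apply Dp_nonneg, HDp.
  - pose proof (fsup_ge _ HF a t) as H. cbv beta in H. rewrite Drefl, (st_H0l star Htf) in H by apply HDp. exact H.
Qed.

Lemma wconv_shift (X : nat -> DF) F N0 : wconv X F -> wconv (fun n => X (n - N0)%nat) F.
Proof.
  intros H t Ht eps He. destruct (H t Ht eps He) as [N HN]. exists (N + N0)%nat. intros n Hn. apply HN. lia.
Qed.

Lemma Pi_complete (g : nat -> G -> DF) : (forall n, inPi G D star (g n)) ->
  CauchyH0 (fun n m => DD G star (g n) (g m)) ->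
  exists fl, inPi G D star fl /\ wconv (fun n => DD G star (g n) fl) H0.
Proof.
  intros Hg HC.
  assert (HL : forall n, isLip G D star (g n)) by (intros; apply Pi_Lip; auto).
  assert (Hgd : forall n x, Dplus (g n x)) by (intros; apply Lip_Dp; auto).
  assert (Hex : forall n, exists x, 1 - / (INR n + 1) < g n x (/ (INR n + 1))).
  { intros n. destruct (Hg n) as [_ [a [Ha Hc]]].
    assert (Hp : 0 < / (INR n + 1)) by (apply Rinv_0_lt_compat; pose proof (pos_INR n); lra).
    destruct (wconv_H0_elim _ (Pi_aH0 (g n) a (HL n) Ha Hc) _ Hp _ Hp) as [N HN].
    exists (a N). apply HN; auto. }
  set (c := fun n => proj1_sig (constructive_indefinite_description _ (Hex n))).
  assert (Hcn : forall n, 1 - / (INR n + 1) < g n (c n) (/ (INR n + 1))).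
  { intros n. unfold c. destruct (constructive_indefinite_description _ _); simpl; auto. }
  assert (Hphi : wconv (fun n => g n (c n)) H0).
  { apply wconv_H0_intro; auto. intros t Ht eps He.
    destruct (inv_small (Rmin t eps)) as [k Hk]. apply Rmin_pos; auto.
    exists k. intros n Hn. specialize (Hk n Hn). pose proof (Rmin_l t eps); pose proof (Rmin_r t eps).
    specialize (Hcn n). pose proof (Dp_mono (g n (c n)) (/ (INR n + 1)) t (Hgd _ _) ltac:(lra)). lra. }
  assert (Hcc : Cauchy_seq G D c).
  { change (CauchyH0 (fun n p => D (c n) (c p))). apply pairs_cauchy. intros; apply HDp.
    intros nj pj Hn Hp.
    apply (wconv_H0_lower (fun j => star (g (nj j) (c (nj j))) (star (DD G star (g (nj j)) (g (pj j))) (g (pj j) (c (pj j))))) _ 0).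
    - intros; apply HDp.
    - intros j _. set (n := nj j). set (p := pj j).
      apply fle_trans with (star (g n (c n)) (g n (c p))); [|apply Pi_pair; auto].
      apply (st_mono_r star Htf); auto. apply sDp; auto. apply DD_Dp; auto. apply K1; auto.
    - rewrite <- (st_H0l star Htf H0) by apply H0_Dp. apply scont.
      + intros; auto.
      + intros; apply sDp; auto. apply DD_Dp; auto.
      + apply H0_Dp.
      + apply H0_Dp.
      + apply (wconv_sub (fun n => g n (c n))); auto.
      + rewrite <- (st_H0l star Htf H0) by apply H0_Dp. apply scont.
        * intros; apply DD_Dp; auto.
        * intros; auto.
        * apply H0_Dp.
        * apply H0_Dp.
        * exact (cauchy_pairs (fun n m => DD G star (g n) (g m)) nj pj HC Hn Hp).
        * apply (wconv_sub (fun n => g n (c n))); auto. }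
  assert (Hlim : forall x, exists F, Dplus F /\ wconv (fun n => D (c n) x) F).
  { intros x. apply (lemC star Htf Hcont (fun n => D (c n) x) (fun n m => D (c n) (c m))).
    - intros; apply HDp.
    - intros; apply HDp.
    - intros; apply Htri.
    - exact Hcc. }
  set (fl := fun x => proj1_sig (constructive_indefinite_description _ (Hlim x))).
  assert (Hfl : forall x, Dplus (fl x) /\ wconv (fun n => D (c n) x) (fl x)).
  { intros x. unfold fl. destruct (constructive_indefinite_description _ _); simpl; auto. }
  assert (HLfl : isLip G D star fl).
  { split. intros; apply Hfl. intros x y.
    apply (W1 (fun n => star (D x y) (D (c n) y)) (fun n => D (c n) x) _ _ 0).
    - apply sDp. apply HDp. apply Hfl.
    - apply Hfl.
    - apply scont.
      + intros; apply HDp.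
      + intros; apply HDp.
      + apply HDp.
      + apply Hfl.
      + apply wconv_const.
      + apply Hfl.
    - apply Hfl.
    - intros n _. rewrite (Hsym (c n) y), (Hsym (c n) x). apply Htri. }
  assert (HPfl : inPi G D star fl).
  { split; auto. exists c; split; auto. intros; apply Hfl. }
  exists fl. split; auto.
  apply (wconv_H0_lower (fun n => star (g n (c n)) (fl (c n))) _ 0).
  - intros; apply DD_Dp; auto.
  - intros n _. apply DD_ge; auto.
  - rewrite <- (st_H0l star Htf H0) by apply H0_Dp. apply scont.
    + intros; auto.
    + intros; apply Hfl.
    + apply H0_Dp.
    + apply H0_Dp.
    + exact Hphi.
    + apply (Pi_aH0 fl c); auto. intros; apply Hfl.
Qed.

Lemma LipT_complete : complete (LipT G D star) (DbarL G D star).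
Proof.
  intros z Hz. set (fz := fun n => proj1_sig (z n)).
  assert (HLz : forall n, isLip G D star (fz n)) by (intros; unfold fz; destruct (z n); auto).
  destruct (Hz 1 (H0_cont 1 ltac:(lra)) (1/2) ltac:(lra)) as [N0 HN0].
  assert (Hst : forall n p, (N0 <= n)%nat -> (N0 <= p)%nat -> ~ (inPi G D star (fz n) /\ inPi G D star (fz p)) -> fz n = fz p).
  { intros n p Hn Hp Hnp. apply NNPP; intros Hne. specialize (HN0 n p Hn Hp). unfold DbarL in HN0.
    fold (fz n) (fz p) in HN0. rewrite Dbar_nPi_neq in HN0 by auto. rewrite H0_pos in HN0 by lra. unfold Hinf in HN0. absr. }
  destruct (classic (exists n, (N0 <= n)%nat /\ ~ inPi G D star (fz n))) as [[n [Hn Hnp]]|Hall].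
  - exists (z n). apply (wconv_ext (fun _ => H0)) with N0; [|apply wconv_const].
    intros p Hp. unfold DbarL. fold (fz p) (fz n). rewrite (Hst p n Hp Hn) by tauto. symmetry. apply Dbar_self.
  - assert (HP : forall n, (N0 <= n)%nat -> inPi G D star (fz n)).
    { intros n Hn. apply NNPP; intros H. apply Hall; eauto. }
    destruct (Pi_complete (fun n => fz (N0 + n)%nat)) as [fl [Hfl Hconv]].
    + intros n; apply HP; lia.
    + intros t Ht eps He. destruct (Hz t Ht eps He) as [N HN]. exists N. intros n p Hn Hp.
      specialize (HN (N0 + n)%nat (N0 + p)%nat ltac:(lia) ltac:(lia)). unfold DbarL in HN. fold (fz (N0+n)%nat) (fz (N0+p)%nat) in HN.
      rewrite Dbar_Pi in HN by (apply HP; lia). exact HN.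
    + exists (exist _ fl (Pi_Lip _ Hfl)).
      apply (wconv_ext (fun n => DD G star (fz (N0 + (n - N0))%nat) fl)) with N0.
      * intros n Hn. unfold DbarL; simpl. fold (fz n). rewrite Dbar_Pi; auto. f_equal. f_equal. lia.
      * apply (wconv_shift (fun n => DD G star (fz (N0 + n)%nat) fl)). exact Hconv.
Qed.

Lemma LipT_PM : PMspace (LipT G D star) (DbarL G D star) star.
Proof.
  split; [apply Htf|split; [|split; [|split]]].
  - intros [f Hf] [g Hg]. unfold DbarL; simpl. apply Dbar_Dp; auto.
  - intros [f Hf] [g Hg]. unfold DbarL; simpl. split.
    + intros H. apply LipT_eq; simpl. apply Dbar_H0; auto.
    + intros H. inversion H. subst. apply Dbar_self.
  - intros [f Hf] [g Hg]. unfold DbarL; simpl. apply Dbar_comm; auto.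
  - intros [f Hf] [g Hg] [h Hh]. unfold DbarL; simpl. apply Dbar_tri; auto.
Qed.

Lemma group_part (mul : G -> G -> G) (e : G) (inv : G -> G) :
  is_group G mul e inv -> invariant G mul D ->
  forall a b, delta G D (mul a b) = odot G mul star (delta G D a) (delta G D b).
Proof.
  intros [Hass [Hid' Hinv]] Hinvar a b. apply functional_extensionality. intros x.
  unfold odot, delta. apply functional_extensionality. intros t.
  set (Fm := fun yz : {p : G * G | mul (fst p) (snd p) = x} => star (D (fst (proj1_sig yz)) a) (D (snd (proj1_sig yz)) b)).
  assert (HF : forall i, Dplus (Fm i)) by (intros; apply sDp; apply HDp).
  apply Rle_antisym.
  - assert (Hx : mul (mul x (inv b)) b = x).
    { rewrite Hass. rewrite (proj1 (Hinv b)). apply Hid'. }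
    pose proof (fsup_ge Fm HF (exist _ (mul x (inv b), b) Hx) t) as H. unfold Fm in H; simpl in H.
    rewrite Drefl, (st_H0r star Htf) in H by apply HDp.
    rewrite <- (proj1 (Hinvar (mul x (inv b)) a b)) in H. rewrite Hx in H. exact H.
  - apply fsup_le; auto. 2: apply Dp_nonneg, HDp.
    intros [[y z] Hyz]. unfold Fm; simpl. simpl in Hyz. subst x.
    rewrite <- (proj1 (Hinvar y a z)). rewrite <- (proj2 (Hinvar z b a)). apply Htri.
Qed.

End GSEC.

Theorem mainTheorem14 :
  forall (G : Type) (D : G -> G -> DF) (star : DF -> DF -> DF),
    PMspace G D star -> star_continuous star ->
    (PMspace (LipT G D star) (DbarL G D star) star /\
     complete (LipT G D star) (DbarL G D star) /\
     (forall a, isLip G D star (delta G D a)) /\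
     (forall a b, Dbar G D star (delta G D a) (delta G D b) = D a b)) /\
    (forall (mul : G -> G -> G) (e : G) (inv : G -> G),
       is_group G mul e inv -> invariant G mul D -> sup_continuous star ->
       forall a b, delta G D (mul a b) = odot G mul star (delta G D a) (delta G D b)).
Proof.
  intros G D star HPM Hcont. split; [split; [|split; [|split]]|].
  - apply LipT_PM; auto.
  - apply LipT_complete; auto.
  - apply delta_Lip; auto.
  - apply Dbar_delta; auto.
  - intros mul e inv Hg Hi _. apply group_part with e inv; auto.
Qed.
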